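(* For every integer $q\ge1$, $\sigma(q)\le e(q)$.
   Context: Standing setup: $b\ge2$ integer, $\mathcal{A}=\{0,\dots,b-1\}$, $\gamma\in(1/b,1)$, $\psi$ a $\mathbb{Z}$-periodic $C^1$ function. $S(x,\mathbf{i})=\sum_{n\ge1}\gamma^{n-1}\psi\big(\frac{x+i_1+i_2b+\cdots+i_nb^{n-1}}{b^n}\big)$ for $\mathbf{i}\in\mathcal{A}^{\mathbb{Z}^+}$, $S'=\partial_xS$. For $\mathbf{u}\in\mathcal{A}^q$, $x(\mathbf{u})=(x+u_1+u_2b+\cdots+u_qb^{q-1})/b^q$. Sequences $\mathbf{i},\mathbf{j}$ are $(\varepsilon,\delta)$-tangent at $x_0$ if $|S(x_0,\mathbf{i})-S(x_0,\mathbf{j})|\le\varepsilon$ and $|S'(x_0,\mathbf{i})-S'(x_0,\mathbf{j})|\le\delta$. $E(q,x_0;\varepsilon,\delta)$: pairs $(\mathbf{k},\mathbf{l})\in\mathcal{A}^q\times\mathcal{A}^q$ with some $\mathbf{u},\mathbf{v}\in\mathcal{A}^{\mathbb{Z}^+}$ such that the concatenations $\mathbf{ku},\mathbf{lv}$ are $(\varepsilon,\delta)$-tangent at $x_0$. For $J\subset\mathbb{R}$: $E(q,J;\varepsilon,\delta)=\bigcup_{x\in J}E(q,x;\varepsilon,\delta)$, $E(q,J)=\bigcap_{\varepsilon,\delta>0}E(q,J;\varepsilon,\delta)$, $e(q,J)=\max_{\mathbf{k}\in\mathcal{A}^q}\#\{\mathbf{l}:(\mathbf{k},\mathbf{l})\in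 E(q,J)\}$, and $e(q)=\lim_{p\to\infty}\max_{0\le k<b^p}e(q,[k/b^p,(k+1)/b^p])$. Weight function: measurable $\omega:[0,1)\to(0,\infty)$ with $\omega,1/\omega$ bounded. Admissible testing function of order $q$: measurable $V:[0,1)\times\mathcal{A}^q\times\mathcal{A}^q\to[0,\infty)$ such that for some $\varepsilon,\delta>0$, $V(x,\mathbf{u},\mathbf{v})V(x,\mathbf{v},\mathbf{u})\ge1$ whenever $(\mathbf{u},\mathbf{v})\in E(q,x;\varepsilon,\delta)$, $x\in[0,1)$. $\Sigma_{V,\omega}(x)=\sup_{\mathbf{u}}\frac{\omega(x)}{\omega(x(\mathbf{u}))}\sum_{\mathbf{v}}V(x,\mathbf{u},\mathbf{v})$; $\sigma(q)=\inf_{\omega,V}\|\Sigma_{V,\omega}\|_\infty$. *)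

(* Defs.v *)
From Stdlib Require Import Reals ClassicalEpsilon.
From mathcomp Require Import all_boot.
Local Open Scope R_scope.

Definition asbool (P : Prop) : bool :=
  if excluded_middle_informative P then true else false.

(* limit of a real sequence (meaningful when it converges) *)
Definition lim_seq (u : nat -> R) : R :=
  epsilon (inhabits 0) (fun l => Un_cv u l).

(* derivative of f at x (meaningful when f is derivable at x) *)
Definition deriv (f : R -> R) (x : R) : R :=
  epsilon (inhabits 0) (fun l => derivable_pt_lim f x l).

Definition null_set (N : R -> Prop) : Prop :=
  forall eps, 0 < eps -> exists a c : nat -> R,
    (forall n, a n <= c n) /\
    (forall x, N x -> exists n, a n < x < c n) /\
    (forall m, sum_f_R0 (fun n => c n - a n) m <= eps).

Inductive borel : (R -> Prop) -> Prop :=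
| borel_int (a c : R) : borel (fun x => a < x < c)
| borel_compl (A : R -> Prop) : borel A -> borel (fun x => ~ A x)
| borel_union (F : nat -> R -> Prop) :
    (forall n, borel (F n)) -> borel (fun x => exists n, F n x)
| borel_ext (A B : R -> Prop) : borel A -> (forall x, A x <-> B x) -> borel B.

(* Lebesgue measurable sets = completion of the Borel sets *)
Definition lmeas (E : R -> Prop) : Prop :=
  exists B N, borel B /\ null_set N /\ (forall x, ~ (E x <-> B x) -> N x).

Definition in01 (x : R) : Prop := 0 <= x < 1.

Definition meas01 (f : R -> R) : Prop :=
  forall a, lmeas (fun x => in01 x /\ a < f x).

Definition esssup01_le (f : R -> R) (c : R) : Prop :=
  null_set (fun x => in01 x /\ c < f x).

(* digit sequences i in A^{Z^+}; position n (0-based) is i_{n+1} *)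
Definition digits (b : nat) (i : nat -> nat) : Prop := forall n, (i n < b)%nat.

Definition num (b : nat) (i : nat -> nat) (n : nat) : nat :=
  (\sum_(k < n) i k * b ^ k)%N.

Definition S (b : nat) (gam : R) (psi : R -> R) (x : R) (i : nat -> nat) : R :=
  lim_seq (fun N => sum_f_R0
    (fun n => gam ^ n * psi ((x + INR (num b i n.+1)) / INR b ^ n.+1)) N).

Definition Sd (b : nat) (gam : R) (psi : R -> R) (x : R) (i : nat -> nat) : R :=
  deriv (fun y => S b gam psi y i) x.

Definition tangent (b : nat) (gam : R) (psi : R -> R)
    (eps del x0 : R) (i j : nat -> nat) : Prop :=
  Rabs (S b gam psi x0 i - S b gam psi x0 j) <= eps /\
  Rabs (Sd b gam psi x0 i - Sd b gam psi x0 j) <= del.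

Definition word (q b : nat) := {ffun 'I_q -> 'I_b}.

(* concatenation k u of a word of length q with an infinite sequence *)
Definition catw (q b : nat) (k : word q b) (u : nat -> nat) : nat -> nat :=
  fun n => oapp (fun i : 'I_q => nat_of_ord (k i)) (u (n - q)%N) (insub n).

Definition xw (q b : nat) (x : R) (u : word q b) : R :=
  (x + INR (\sum_(i < q) (u i : nat) * b ^ i)%N) / INR b ^ q.

Definition Ex (b : nat) (gam : R) (psi : R -> R) (q : nat)
    (x0 eps del : R) (k l : word q b) : Prop :=
  exists u v : nat -> nat, digits b u /\ digits b v /\
    tangent b gam psi eps del x0 (catw q b k u) (catw q b l v).

Definition EJ (b : nat) (gam : R) (psi : R -> R) (q : nat)
    (J : R -> Prop) (k l : word q b) : Prop :=
  forall eps del, 0 < eps -> 0 < del ->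
    exists x, J x /\ Ex b gam psi q x eps del k l.

Definition eJ (b : nat) (gam : R) (psi : R -> R) (q : nat) (J : R -> Prop) : nat :=
  (\max_(k : word q b) #|[set l : word q b | asbool (EJ b gam psi q J k l)]|)%N.

Definition badic (b p k : nat) (x : R) : Prop :=
  INR k / INR b ^ p <= x <= INR k.+1 / INR b ^ p.

Definition emax (b : nat) (gam : R) (psi : R -> R) (q p : nat) : nat :=
  \max_(k < (b ^ p)%N)
     eJ b gam psi q (badic b p k).

(* e(q) = lim_{p->oo} emax p  (a sequence of naturals, eventually constant) *)
Definition e_q (b : nat) (gam : R) (psi : R -> R) (q : nat) : nat :=
  epsilon (inhabits 0%N)
    (fun m => exists P, forall p, (P <= p)%nat -> emax b gam psi q p = m).

Definition weight (om : R -> R) : Prop :=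
  meas01 om /\ (forall x, in01 x -> 0 < om x) /\
  exists M, forall x, in01 x -> om x <= M /\ / om x <= M.

Definition admissible (b : nat) (gam : R) (psi : R -> R) (q : nat)
    (V : R -> word q b -> word q b -> R) : Prop :=
  (forall u v, meas01 (fun x => V x u v)) /\
  (forall x u v, in01 x -> 0 <= V x u v) /\
  exists eps del, 0 < eps /\ 0 < del /\
    forall x u v, in01 x -> Ex b gam psi q x eps del u v ->
      1 <= V x u v * V x v u.

Definition Sigma (q b : nat) (V : R -> word q b -> word q b -> R)
    (om : R -> R) (x : R) : R :=
  \big[Rmax/0]_(u : word q b)
     (om x / om (xw q b x u) * \big[Rplus/0]_(v : word q b) V x u v).

(* sigma(q) <= c, where sigma(q) = inf_{omega,V} ||Sigma_{V,omega}||_oo *)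
Definition sigma_le (b : nat) (gam : R) (psi : R -> R) (q : nat) (c : R) : Prop :=
  forall eta, 0 < eta -> exists (om : R -> R) (V : R -> word q b -> word q b -> R),
    weight om /\ admissible b gam psi q V /\ esssup01_le (Sigma q b V om) (c + eta).

(* Main.v *)
Require Import Defs.
From Stdlib Require Import Reals Lra Classical ClassicalEpsilon.
From mathcomp Require Import all_boot zify.
Local Open Scope R_scope.

Lemma INR_expn (b p : nat) : INR (b ^ p)%N = INR b ^ p.
Proof.
elim: p => [|p IH]; first by rewrite expn0 /=.
by rewrite expnS mult_INR IH /=.
Qed.

Lemma asboolT (P : Prop) : asbool P = true <-> P.
Proof. rewrite /asbool; case: excluded_middle_informative => //. Qed.

Lemma sum_ind (T : finType) (P : T -> bool) :
  \big[Rplus/0]_(v : T) (if P v then 1 else 0) = INR #|[set v | P v]|.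
Proof.
rewrite -sum1_card big_mkcond /=.
rewrite (big_morph INR (id1:=0) (op1:=Rplus) plus_INR) //.
apply: eq_bigr => v _; rewrite in_set; by case: (P v).
Qed.

Lemma Rmax_big_le (T : finType) (F : T -> R) c :
  0 <= c -> (forall u, F u <= c) -> \big[Rmax/0]_(u : T) F u <= c.
Proof.
move=> h0 hF; apply: (big_ind (fun y => y <= c)) => //.
by move=> x y hx hy; apply: Rmax_lub.
Qed.

Lemma borel_empty : borel (fun _ => False).
Proof. apply: (borel_ext (fun x => 0 < x < 0)); [constructor|]; move=> x; split; lra. Qed.

Lemma borel_union2 A B : borel A -> borel B -> borel (fun x => A x \/ B x).
Proof.
move=> hA hB.
apply: (borel_ext (fun x => exists n, (fun n => if n is O then A else B) n x)).
  by constructor; case.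
move=> x; split; first by case=> [[|n]] /=; auto.
by case=> h; [exists O | exists 1%N].
Qed.

Lemma borel_inter A B : borel A -> borel B -> borel (fun x => A x /\ B x).
Proof.
move=> hA hB.
apply: (borel_ext (fun x => ~ (~ A x \/ ~ B x))).
  by apply: borel_compl; apply: borel_union2; apply: borel_compl.
move=> x; tauto.
Qed.

Lemma borel_hopen a c : borel (fun x => a <= x < c).
Proof.
apply: (borel_ext (fun x => (a - 1 < x < c) /\ ~ (a - 1 < x < a))).
  apply: borel_inter; [constructor| apply: borel_compl; constructor].
move=> x; split.
  move=> [h1 h2]; split; last lra.
  by apply: Rnot_lt_le => h3; apply: h2; lra.
move=> h; split; lra.
Qed.

Lemma null_empty : null_set (fun _ => False).
Proof.
move=> eps he; exists (fun _ => 0), (fun _ => 0); split; first by move=> n; lra.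
split; first by [].
by elim=> [|m IH] /=; lra.
Qed.

Lemma borel_lmeas E : borel E -> lmeas E.
Proof.
move=> hE; exists E, (fun _ => False); split; first by [].
split; first exact: null_empty.
move=> x h; apply: h; tauto.
Qed.

Lemma borel_exists (N : nat) (P : nat -> Prop) (G : nat -> R -> Prop) :
  (forall k, borel (G k)) ->
  borel (fun x => exists k, (k < N)%nat /\ P k /\ G k x).
Proof.
move=> hG.
apply: (borel_ext (fun x => exists k, (fun k x => (k < N)%nat /\ P k /\ G k x) k x)).
  constructor => k.
  case: (classic ((k < N)%nat /\ P k)) => h.
    by apply: (borel_ext (G k)) => // x; tauto.
  by apply: (borel_ext (fun _ => False)); [exact: borel_empty| move=> x; tauto].
by [].
Qed.

Lemma borel_in01 : borel in01.
Proof. exact: borel_hopen. Qed.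

Lemma floor_ex (N : nat) (y : R) : 0 <= y < INR N ->
  exists n, (n < N)%nat /\ INR n <= y < INR n + 1.
Proof.
elim: N => [|N IH] hy; first by simpl in hy; lra.
case: (Rlt_or_le y (INR N)) => h.
  have [n [hn hn']] := IH (conj (proj1 hy) h); exists n; split => //; lia.
exists N; split; first lia.
rewrite S_INR in hy; lra.
Qed.
Section P2.
Variables (b : nat) (gam : R) (psi : R -> R) (q : nat).

Lemma Ex_mono x e d e' d' (k l : word q b) : e <= e' -> d <= d' ->
  Ex b gam psi q x e d k l -> Ex b gam psi q x e' d' k l.
Proof.
move=> he hd [u [v [hu [hv [h1 h2]]]]]; exists u, v; do 2 split => //.
split; lra.
Qed.

Lemma Ex_sym x e d (k l : word q b) :
  Ex b gam psi q x e d k l -> Ex b gam psi q x e d l k.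
Proof.
move=> [u [v [hu [hv [h1 h2]]]]]; exists v, u; do 2 split => //.
by split; rewrite Rabs_minus_sym.
Qed.

Lemma EJ_mono (J J' : R -> Prop) (k l : word q b) : (forall x, J' x -> J x) ->
  EJ b gam psi q J' k l -> EJ b gam psi q J k l.
Proof.
move=> hJ h e d he hd; have [x [hx hE]] := h e d he hd.
by exists x; split => //; apply: hJ.
Qed.

Lemma eJ_mono (J J' : R -> Prop) : (forall x, J' x -> J x) ->
  (eJ b gam psi q J' <= eJ b gam psi q J)%N.
Proof.
move=> hJ; rewrite /eJ; apply/bigmax_leqP => k _.
apply: (leq_trans _ (leq_bigmax k)).
apply: subset_leq_card; apply/subsetP => l; rewrite !in_set.
move/asboolT => h; apply/asboolT; exact: EJ_mono h.
Qed.

Hypothesis hb : (2 <= b)%nat.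

Lemma INRb_pos : 0 < INR b.
Proof. apply: lt_0_INR; apply/ltP; lia. Qed.

Lemma badic_sub p k' x : badic b p.+1 k' x -> badic b p (k' %/ b) x.
Proof.
rewrite /badic => [[h1 h2]].
have hB : 0 < INR b ^ p by apply: pow_lt; exact: INRb_pos.
have hb0 := INRb_pos.
have n1 : (k' %/ b * b <= k')%N by lia.
have n2 : (k'.+1 <= (k' %/ b).+1 * b)%N by lia.
move/leP: n1 => n1; move/leP: n2 => n2.
apply le_INR in n1; apply le_INR in n2.
rewrite mult_INR in n1; rewrite mult_INR in n2.
simpl pow in h1, h2.
set K := INR (k' %/ b) in n1 n2 *.
set K1 := INR (k' %/ b).+1 in n2 *.
split.
  apply: Rle_trans h1.
  apply: (Rmult_le_reg_r (INR b * INR b ^ p)); first nra.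
  have -> : K / INR b ^ p * (INR b * INR b ^ p) = K * INR b by field; lra.
  have -> : INR k' / (INR b * INR b ^ p) * (INR b * INR b ^ p) = INR k' by field; lra.
  lra.
apply: Rle_trans h2 _.
apply: (Rmult_le_reg_r (INR b * INR b ^ p)); first nra.
have -> : K1 / INR b ^ p * (INR b * INR b ^ p) = K1 * INR b by field; lra.
have -> : INR k'.+1 / (INR b * INR b ^ p) * (INR b * INR b ^ p) = INR k'.+1 by field; lra.
lra.
Qed.

Lemma emax_decr p : (emax b gam psi q p.+1 <= emax b gam psi q p)%N.
Proof.
rewrite /emax; apply/bigmax_leqP => k' _.
have hk : (k' %/ b < b ^ p)%N.
  have h : (k' < b * b ^ p)%N by rewrite -expnS; exact: ltn_ord.
  rewrite ltn_divLR; last lia. by rewrite mulnC.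
apply: (leq_trans _ (leq_bigmax (Ordinal hk))).
apply: eJ_mono => x /=; exact: badic_sub.
Qed.

End P2.

Local Open Scope nat_scope.
Lemma noninc_const (f : nat -> nat) : (forall p, (f p.+1 <= f p)%N) ->
  exists m P, forall p, (P <= p)%nat -> f p = m.
Proof.
move=> hf.
have mono : forall g : nat -> nat, (forall p, (g p.+1 <= g p)%N) ->
  forall p r, (p <= r)%N -> (g r <= g p)%N.
  move=> g hg p r /subnK <-; elim: (r - p)%N => [|n IH] //=.
  by rewrite addSn; apply: (leq_trans (hg _) IH).
suff: forall n (g : nat -> nat), (forall p, (g p.+1 <= g p)%N) -> (g 0 <= n)%N ->
  exists m P, forall p, (P <= p)%nat -> g p = m.
  move=> H; exact: (H (f 0%N) f hf (leqnn _)).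
elim=> [|n IH] g hg hn.
  exists 0%N, 0%N => p _; have := mono g hg 0 p (leq0n _); lia.
case: (classic (exists p, g p <> g 0)) => [[p hp]|hno].
  have hle := mono g hg 0 p (leq0n _).
  have hg' : forall i, g (p + i.+1) <= g (p + i) by move=> i; rewrite addnS; apply: hg.
  have [m [P HP]] := IH (fun i => g (p + i)) hg' ltac:(simpl; rewrite addn0; lia).
  exists m, (p + P)%N => r hr.
  have := HP (r - p)%N ltac:(lia). by have -> : (p + (r - p) = r)%N by lia.
exists (g 0), 0%N => r _; apply: NNPP => h; apply: hno; by exists r.
Qed.

Local Open Scope R_scope.
Lemma null_none (N : R -> Prop) : (forall x, ~ N x) -> null_set N.
Proof.
move=> hN eps he; exists (fun _ => 0), (fun _ => 0); split; first by move=> n; lra.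
split; first by move=> x /hN.
by elim=> [|m IH] /=; lra.
Qed.

Lemma asboolF (P : Prop) : asbool P = false -> ~ P.
Proof. by move=> h hP; move/asboolT: hP; rewrite h. Qed.

Lemma unif_list (T : eqType) (Q : T -> R -> Prop) (s : seq T) :
  (forall t e e', 0 < e' <= e -> Q t e -> Q t e') ->
  (forall t, exists e, 0 < e /\ Q t e) ->
  exists e, 0 < e /\ forall t, t \in s -> Q t e.
Proof.
move=> hdown hex; elim: s => [|t s [e [he hs]]].
  by exists 1; split => //; lra.
have [e1 [he1 hq]] := hex t.
exists (Rmin e e1); split; first by apply: Rmin_pos.
move=> t'; rewrite in_cons => /orP [/eqP ->|ht].
  apply: (hdown t e1) => //; split; [apply: Rmin_pos => // | apply: Rmin_r].
apply: (hdown t' e) => //; last by apply: hs.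
split; [apply: Rmin_pos => // | apply: Rmin_l].
Qed.

Definition hopen (b p k : nat) (x : R) : Prop :=
  INR k / INR b ^ p <= x < INR k.+1 / INR b ^ p.

Definition Vf (b : nat) (gam : R) (psi : R -> R) (q p : nat) (x : R)
  (u v : word q b) : R :=
  if asbool (exists k, (k < b ^ p)%nat /\ hopen b p k x /\
     EJ b gam psi q (badic b p k) u v) then 1 else 0.

Section P3.
Variables (b : nat) (hb : (2 <= b)%nat).

Lemma hopen_ex p x : in01 x -> exists k, (k < b ^ p)%nat /\ hopen b p k x.
Proof.
move=> [h0 h1].
have hB : 0 < INR b ^ p by apply: pow_lt; exact: INRb_pos.
have [n [hn [hn1 hn2]]] := floor_ex (b ^ p) (x * INR b ^ p)
  ltac:(rewrite INR_expn; split; nra).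
exists n; split => //; rewrite /hopen S_INR; split.
  apply: (Rmult_le_reg_r (INR b ^ p)) => //.
  have -> : INR n / INR b ^ p * INR b ^ p = INR n by field; lra. lra.
apply: (Rmult_lt_reg_r (INR b ^ p)) => //.
have -> : (INR n + 1) / INR b ^ p * INR b ^ p = INR n + 1 by field; lra. lra.
Qed.

Lemma hopen_uniq p k k' x : hopen b p k x -> hopen b p k' x -> k = k'.
Proof.
have hB : 0 < INR b ^ p by apply: pow_lt; exact: INRb_pos.
rewrite /hopen !S_INR => [[a1 a2]] [c1 c2].
have e1 : INR k < INR k' + 1.
  apply: (Rmult_lt_reg_r (/ INR b ^ p)); first by apply: Rinv_0_lt_compat.
  rewrite -!/(Rdiv _ _); lra.
have e2 : INR k' < INR k + 1.
  apply: (Rmult_lt_reg_r (/ INR b ^ p)); first by apply: Rinv_0_lt_compat.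
  rewrite -!/(Rdiv _ _); lra.
rewrite -S_INR in e1; rewrite -S_INR in e2.
apply INR_lt in e1; apply INR_lt in e2; lia.
Qed.

Lemma hopen_badic p k x : hopen b p k x -> badic b p k x.
Proof. by rewrite /hopen /badic; lra. Qed.

End P3.
Theorem lemma2p3 (b : nat) (gam : R) (psi dpsi : R -> R)
  (hb : (2 <= b)%nat)
  (hgam : / INR b < gam < 1)
  (hper : forall x, psi (x + 1) = psi x)
  (hder : forall x, derivable_pt_lim psi x (dpsi x))
  (hcont : continuity dpsi)
  (q : nat) (hq : (1 <= q)%nat) :
  sigma_le b gam psi q (INR (e_q b gam psi q)).
Proof.
move=> eta heta.
have [m [P0 HP]] := noninc_const (emax b gam psi q) (emax_decr b gam psi q hb).
have [p Hp] := epsilon_spec (inhabits 0%N)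
  (fun m => exists P, forall p, (P <= p)%nat -> emax b gam psi q p = m)
  (ex_intro _ m (ex_intro _ P0 HP)).
have Hep : emax b gam psi q p = e_q b gam psi q by apply: Hp.
pose T := ('I_(b ^ p) * {ffun 'I_q -> 'I_b} * {ffun 'I_q -> 'I_b})%type.
pose Q (t : T) (e : R) := forall x, badic b p t.1.1 x ->
  Ex b gam psi q x e e t.1.2 t.2 -> EJ b gam psi q (badic b p t.1.1) t.1.2 t.2.
have [e [he HQ]] : exists e, 0 < e /\ forall t, t \in index_enum T -> Q t e.
  apply: unif_list.
    move=> t e0 e' [h1 h2] hQ x hx hE; apply: (hQ x hx).
    by apply: (Ex_mono _ _ _ _ _ _ _ _ _ _ _ h2 h2 hE).
  move=> t; case: (classic (EJ b gam psi q (badic b p t.1.1) t.1.2 t.2)) => hE.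
    by exists 1; split; [lra| move=> x _ _].
  have [eps hn] := not_all_ex_not _ _ hE.
  have [del hn2] := not_all_ex_not _ _ hn.
  have [he1 hn3] := imply_to_and _ _ hn2.
  have [hd1 hn4] := imply_to_and _ _ hn3.
  exists (Rmin eps del); split; first by apply: Rmin_pos.
  move=> x hx hEx; exfalso; apply: hn4; exists x; split => //.
  apply: (Ex_mono _ _ _ _ _ _ _ _ _ _ _ _ _ hEx); [apply: Rmin_l|apply: Rmin_r].
have HQ' : forall (k : 'I_(b ^ p)) (u v : {ffun 'I_q -> 'I_b}) x,
    badic b p k x -> Ex b gam psi q x e e u v -> EJ b gam psi q (badic b p k) u v.
  by move=> k u v x; apply: (HQ (k, u, v)); rewrite mem_index_enum.
exists (fun _ => 1), (Vf b gam psi q p).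
split.
  split.
    move=> a; apply: borel_lmeas.
    case: (Rlt_or_le a 1) => ha.
      by apply: (borel_ext in01); [exact: borel_in01| move=> x; split; [|case]].
    by apply: (borel_ext (fun _ => False)); [exact: borel_empty| move=> x; split => //; lra].
  split; first by move=> x _; lra.
  by exists 1 => x _; rewrite Rinv_1; lra.
split.
  split.
    move=> u v a; apply: borel_lmeas.
    case: (Rlt_or_le a 0) => ha.
      apply: (borel_ext in01); first exact: borel_in01.
      move=> x; split; [move=> h; split => //| by case].
      by rewrite /Vf; case: (asbool _); lra.
    case: (Rlt_or_le a 1) => ha1.
      apply: (borel_ext (fun x => in01 x /\ exists k, (k < b ^ p)%nat /\
          EJ b gam psi q (badic b p k) u v /\ hopen b p k x)).
        apply: borel_inter; first exact: borel_in01.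
        apply: borel_exists => k; exact: borel_hopen.
      move=> x; split.
        move=> [h1 [k [hk [hE hh]]]]; split => //.
        rewrite /Vf; have -> // : asbool (exists k, (k < b ^ p)%nat /\ hopen b p k x /\
          EJ b gam psi q (badic b p k) u v) = true.
        by apply/asboolT; exists k.
      move=> [h1]; rewrite /Vf; case E: (asbool _); last lra.
      move/asboolT: E => [k [hk [hh hE]]] _; split => //; by exists k.
    apply: (borel_ext (fun _ => False)); first exact: borel_empty.
    move=> x; split => //; rewrite /Vf; case: (asbool _); lra.
  split; first by move=> x u v _; rewrite /Vf; case: (asbool _); lra.
  exists e, e; split => //; split => // x u v hx hE.
  have [k [hk hh]] := hopen_ex b hb p x hx.
  have E1 := HQ' (Ordinal hk) u v x (hopen_badic _ _ _ _ hh) hE.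
  have E2 := HQ' (Ordinal hk) v u x (hopen_badic _ _ _ _ hh) (Ex_sym _ _ _ _ _ _ _ _ _ hE).
  rewrite /Vf.
  have -> : asbool (exists k, (k < b ^ p)%nat /\ hopen b p k x /\
          EJ b gam psi q (badic b p k) u v) = true by apply/asboolT; exists k.
  have -> : asbool (exists k, (k < b ^ p)%nat /\ hopen b p k x /\
          EJ b gam psi q (badic b p k) v u) = true by apply/asboolT; exists k.
  lra.
apply: null_none => x [hx hS]; move: hS; apply: Rle_not_lt.
apply: Rle_trans (_ : INR (e_q b gam psi q) <= _); last lra.
apply: Rmax_big_le; first exact: pos_INR.
move=> u.
have [k [hk hh]] := hopen_ex b hb p x hx.
rewrite /Rdiv Rinv_1 Rmult_1_l.
rewrite /Vf sum_ind Rmult_1_l; apply: le_INR; apply/leP.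
rewrite -Hep.
apply: (leq_trans _ (leq_bigmax (Ordinal hk))).
rewrite /eJ /=.
apply: (leq_trans _ (leq_bigmax u)).
apply: subset_leq_card; apply/subsetP => v; rewrite !in_set.
move/asboolT => [k' [hk' [hh' hE]]]; apply/asboolT.
by have <- : k' = k by apply: (hopen_uniq b hb p k' k x).
Qed.
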